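(* For all $m\in\mathbb{N}$ and $\boldsymbol{\mu}\in\Delta_\mathbb{N}$, with $\boldsymbol{X}\sim\boldsymbol{\mu}^m$ and $\widehat{\boldsymbol{\mu}}_m$ its empirical measure, $$\mathbb{E}\,\Phi_m(\widehat{\boldsymbol{\mu}}_m)\le 2\Lambda_m(\boldsymbol{\mu}),$$ and for every $\delta\in(0,1)$, with probability at least $1-\delta$, $$\Phi_m(\widehat{\boldsymbol{\mu}}_m)\le 2\Lambda_m(\boldsymbol{\mu})+\sqrt{\log(1/\delta)/m}.$$
   Context: $\Delta_\mathbb{N}$ is the set of probability distributions on $\mathbb{N}=\{1,2,\dots\}$. For $\boldsymbol{X}=(X_1,\dots,X_m)$ i.i.d. from $\boldsymbol{\mu}$, $\widehat{\boldsymbol{\mu}}_m(i)=\frac1m\sum_{t=1}^m\mathbb{I}\{X_t=i\}$. $\Phi_m(\widehat{\boldsymbol{\mu}}_m):=\frac1{\sqrt m}\sum_{j\in\mathbb{N}}\sqrt{\widehat{\boldsymbol{\mu}}_m(j)}$. $\Lambda_m(\boldsymbol{\mu}):=\sum_{j:\boldsymbol{\mu}(j)<1/m}\boldsymbol{\mu}(j)+\frac{1}{2\sqrt m}\sum_{j:\boldsymbol{\mu}(j)\ge 1/m}\sqrt{\boldsymbol{\mu}(j)}$. $\log$ is the natural logarithm. *)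

(* Defs.v *)
From HB Require Import structures.
From mathcomp Require Import all_boot all_order all_algebra.
From mathcomp Require Import all_classical all_reals all_analysis.
Set Implicit Arguments. Unset Strict Implicit. Unset Printing Implicit Defensive.
Import Order.TTheory GRing.Theory Num.Theory.
Local Open Scope classical_set_scope.
Local Open Scope ring_scope.

Section Defs.
Variable R : realType.

(* mu is a probability distribution on N = {1,2,...}: nonnegative, no mass
   at 0 (so it lives on {1,2,...}), total mass 1. *)
Definition is_distrN (mu : nat -> R) : Prop :=
  [/\ forall j, 0 <= mu j, mu 0%N = 0 &
      (\esum_(j in [set: nat]) (mu j)%:E = 1)%E].

Definition sample_prob (m : nat) (mu : nat -> R) (x : m.-tuple nat) : R :=
  \prod_(t < m) mu (tnth x t).

Definition emp (m : nat) (x : m.-tuple nat) (i : nat) : R :=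
  (count (pred1 i) x)%:R / m%:R.

Definition Phi (m : nat) (x : m.-tuple nat) : \bar R :=
  ((Num.sqrt m%:R)^-1%:E *
   \esum_(j in [set j : nat | (0 < j)%N]) (Num.sqrt (emp x j))%:E)%E.

Definition Lambda (m : nat) (mu : nat -> R) : \bar R :=
  (\esum_(j in [set j : nat | (0 < j)%N /\ (mu j < m%:R^-1)%R]) (mu j)%:E
   + (2 * Num.sqrt m%:R)^-1%:E *
     \esum_(j in [set j : nat | (0 < j)%N /\ (m%:R^-1 <= mu j)%R])
        (Num.sqrt (mu j))%:E)%E.

Definition E_Phi (m : nat) (mu : nat -> R) : \bar R :=
  (\esum_(x in [set: m.-tuple nat]) ((sample_prob mu x)%:E * Phi x))%E.

Definition Prob (m : nat) (mu : nat -> R) (A : set (m.-tuple nat)) : \bar R :=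
  (\esum_(x in A) (sample_prob mu x)%:E)%E.

End Defs.

(* Main.v *)
Require Import Defs.
From HB Require Import structures.
From mathcomp Require Import all_boot all_order all_algebra.
From mathcomp Require Import all_classical all_reals all_analysis.
From mathcomp Require Import ring lra.
Import Order.TTheory GRing.Theory Num.Theory.
Import numFieldNormedType.Exports.
Local Open Scope classical_set_scope.
Local Open Scope ring_scope.


Lemma alg_fact (R : realType) (p t : R) : 0 <= p <= 1 -> 0 <= t ->
  p * expR t <= (p + t / 2) * (1 - p + p * expR t).
Proof.
move=> /andP[p0 p1] t0.
have et1 : 1 <= expR t by rewrite -expR0 ler_expR.
have [hp|hp] := leP (1 - p) (t / 2).
  have h1 : 1 <= p + t / 2 by lra.
  have h2 : 0 <= p * expR t by rewrite mulr_ge0 // expR_ge0.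
  nra.
set x := t / 2.
have tx : t = x + x by rewrite /x; field.
set u := expR x.
have eu : expR t = u * u by rewrite tx expRD.
have u1 : 1 + x <= u := expR_ge1Dx x.
have x0 : 0 <= x by rewrite /x; lra.
have ux : u * (1 - x) <= 1.
  have := expR_ge1Dx (- x); rewrite expRN -/u => h.
  have u0 : 0 < u by apply: expR_gt0.
  have : (1 - x) <= u^-1 by lra.
  by rewrite -(ler_pM2l u0) mulfV ?gt_eqF.
have A : u * (1 - p - x) <= 1 - p by nra.
have A0 : 0 <= u * (1 - p - x) by apply: mulr_ge0; lra.
have B : p * u <= p + x.
  have : p * u * (1 - x) <= (p + x) * (1 - x) by nra.
  by rewrite ler_pM2r; lra.
rewrite eu.
have : p * (u * u) * (1 - p - x) <= (p + x) * (1 - p).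
  rewrite -mulrA -mulrA mulrA.
  have B0 : 0 <= p * u by nra.
  apply: (le_trans (y := (p + x) * (u * (1 - p - x)))).
    by rewrite ler_wpM2r.
  by rewrite ler_wpM2l //; lra.
nra.
Qed.

Lemma hoeff (R : realType) (p t : R) : 0 <= p <= 1 -> 0 <= t ->
  1 - p + p * expR t <= expR (t * p + t ^+ 2 / 4).
Proof.
move=> hp t0.
pose f1 := fun s : R => 1 - p + p * expR s.
pose g := fun s : R => - (s * p + s ^+ 2 / 4).
pose F := fun s : R => f1 s * expR (g s).
pose dF := fun s : R => expR (g s) * (p * expR s - (p + s / 2) * f1 s).
have dF_ok : forall s : R, is_derive s (1:R) F (dF s).
  move=> s.
  have d1 : is_derive s (1:R) f1 (p * expR s).
    rewrite /f1; apply: is_derive_eq.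
    by rewrite add0r mul1r.
  have dg : is_derive s (1:R) g (- (p + s / 2)).
    rewrite /g; apply: is_derive_eq.
    rewrite !scaler0 ?scaler0 ?addr0 ?add0r /GRing.scale /= ?mulr1; field; done.
  have d2 : is_derive s (1:R) (expR \o g) (expR (g s) * (- (p + s / 2))).
    exact: (is_derive1_comp (is_derive_expR (g s)) dg).
  have -> : F = f1 * (expR \o g) by [].
  apply: is_derive_eq.
  rewrite /dF /= /GRing.scale /=; ring.
have [c c0t] := MVT_segment t0 (fun x _ => dF_ok x)
  (derivable_within_continuous (fun x _ => let: DeriveDef h _ := dF_ok x in h)).
have dFc : dF c <= 0.
  rewrite /dF; apply: mulr_ge0_le0; first exact: expR_ge0.
  rewrite subr_le0; apply: alg_fact => //.
  by move: c0t; rewrite in_itv /= => /andP[].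
have F0 : F 0 = 1 by rewrite /F /f1 /g expR0 mul0r expr0n /= mul0r addr0 oppr0 expR0; lra.
move=> e.
have Ft : F t <= 1.
  have : F t - F 0 <= 0 by rewrite e; nra.
  by rewrite F0; lra.
move: Ft.
rewrite /F /g expRN => h.
have ep := expR_gt0 (t * p + t ^+ 2 / 4).
by move: h; rewrite ler_pdivrMr // mul1r.
Qed.

Lemma esumZl (R : realType) (T : choiceType) (I : set T) (a : T -> \bar R) (r : R) :
  0 <= r -> (forall i, (0 <= a i)%E) ->
  \esum_(i in I) (r%:E * a i)%E = (r%:E * \esum_(i in I) a i)%E.
Proof.
move=> r0 a0; rewrite /esum -ereal_supZl//; last first.
  by apply/set0P; exists 0%E; exists set0; [exact: fsets_set0|rewrite fsbig_set0].
congr ereal_sup; apply/seteqP; split => x /=.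
- move=> [A fA <-]; exists (\sum_(i \in A) a i)%E; first by exists A.
  by rewrite ge0_mule_fsumr.
- by move=> [y [A fA <-] <-]; exists A => //; rewrite ge0_mule_fsumr.
Qed.

Lemma esum_tuple_prod (R : realType) (m : nat) (h : nat -> nat -> R) (c : nat -> R) :
  (forall t j, 0 <= h t j) ->
  (forall t, (t < m)%N -> \esum_(j in [set: nat]) (h t j)%:E = (c t)%:E) ->
  \esum_(x in [set: m.-tuple nat]) (\prod_(t < m) h t (tnth x t))%:E =
  (\prod_(t < m) c t)%:E.
Proof.
elim: m h c => [|m IH] h c h0 hc.
  have -> : [set: 0.-tuple nat] = [set [tuple]].
    by apply/seteqP; split => x // _; rewrite /= (tuple0 x).
  by rewrite esum_set1 ?big_ord0 // lee_fin.
have c0 t : (t < m.+1)%N -> 0 <= c t.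
  by move=> /hc; rewrite -lee_fin => <-; apply: esum_ge0 => j _; rewrite lee_fin.
rewrite (reindex_esum (setT `*`` (fun _ => setT)) setT
  (fun z : nat * m.-tuple nat => [tuple of z.1 :: z.2])); last first.
  split.
  - by move=> z.
  - by move=> [a y] [b z] _ _ /= /(congr1 val) /= [-> /val_inj ->].
  - by move=> x _; exists (thead x, behead_tuple x) => //=; rewrite [RHS]tuple_eta.
rewrite -(esum_esum (I := setT) (J := fun _ => setT) (a := fun (j : nat) (y : m.-tuple nat) => (\prod_(t < m.+1) h t (tnth [tuple of j :: y] t))%:E)); last first.
  by move=> i j _ _; rewrite lee_fin prodr_ge0.
transitivity (\esum_(j in [set: nat]) ((h 0%N j)%:E * (\prod_(t < m) c t.+1)%:E)%E).
  apply: eq_esum => j _.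
  rewrite (eq_esum (b := fun y : m.-tuple nat =>
       ((h 0%N j)%:E * (\prod_(t < m) h t.+1 (tnth y t))%:E)%E)); last first.
    move=> y _ /=; rewrite big_ord_recl /= EFinM tnth0; congr (_ * _)%E.
    by congr (_%:E); apply: eq_bigr => i _; rewrite tnthS.
  rewrite esumZl //; last by move=> y; rewrite lee_fin prodr_ge0.
  by rewrite (IH (fun t => h t.+1) (fun t => c t.+1)) // => t tm; apply: hc.
under eq_esum do rewrite muleC.
rewrite esumZl.
- rewrite hc // big_ord_recl -EFinM mulrC; reflexivity.
- by apply: prodr_ge0 => i _; apply: c0; rewrite ltnS.
- by move=> y; rewrite lee_fin.
Qed.

Lemma exp_chord (R : realType) (th g : R) : 0 <= g -> g <= 1 ->
  expR (th * g) <= 1 - g + g * expR th.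
Proof.
move=> g0 g1.
have := convex_expR (Itv01 g0 g1) th 0.
rewrite !convRE /= expR0 /unstable.onem mulr0 addr0 mulr1 (mulrC g th) => h.
by apply: (le_trans h); lra.
Qed.

Lemma key_pt (R : realType) (M mu : R) (n : nat) : 0 < M -> 0 <= mu ->
  (Num.sqrt M)^-1 * Num.sqrt (n%:R / M) <=
  M^-1 * (n%:R * (if mu < M^-1 then 1 else (2 * Num.sqrt (M * mu))^-1))
  + (if M^-1 <= mu then (2 * Num.sqrt M)^-1 * Num.sqrt mu else 0).
Proof.
move=> M0 mu0.
set r := Num.sqrt M.
have r0 : 0 < r by rewrite sqrtr_gt0.
have rr : M = r * r by rewrite -expr2 sqr_sqrtr // ltW.
set q := Num.sqrt (n%:R : R).
have q0 : 0 <= q by apply: sqrtr_ge0.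
have qq : (n%:R : R) = q * q by rewrite -expr2 sqr_sqrtr.
have -> : Num.sqrt (n%:R / M) = q / r.
  by rewrite sqrtrM ?ler0n // sqrtrV // ltW.
have [small|big] := ltP mu M^-1.
  rewrite addr0 mulr1 qq rr.
  have : q <= q * q.
    have [n0|n1] := eqVneq n 0%N.
      have : q * q == 0 by rewrite -qq n0.
      by rewrite mulf_eq0 orbb => /eqP ->; rewrite mulr0.
    have n1' : (1 : R) <= n%:R by rewrite ler1n lt0n.
    have : Num.sqrt 1 <= q by rewrite /q ler_sqrt ?ler0n.
    rewrite sqrtr1.
    nra.
  move=> h.
  have e1 : r^-1 * (q / r) = q / (r * r) by field; lra.
  have e2 : (r * r)^-1 * (q * q) = (q * q) / (r * r) by field; lra.
  by rewrite e1 e2 ler_pM2r // invr_gt0; apply: mulr_gt0.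
have mu0' : 0 < mu by apply: lt_le_trans big; rewrite invr_gt0.
set v := Num.sqrt mu.
have v0 : 0 < v by rewrite sqrtr_gt0.
have -> : Num.sqrt (M * mu) = r * v by rewrite sqrtrM // ltW.
rewrite qq rr.
have e : (r * r)^-1 * (q * q / (2 * (r * v))) + (2 * r)^-1 * v - r^-1 * (q / r)
   = (q - r * v) ^+ 2 / (2 * (r * v) * (r * r)).
  by field; apply/andP; split; apply/lt0r_neq0.
rewrite -subr_ge0 e; apply: divr_ge0; first exact: sqr_ge0.
by apply: mulr_ge0; [apply: mulr_ge0 => //; apply: mulr_ge0; lra|nra].
Qed.

Section Main.
Variable R : realType.
Variable m : nat.
Hypothesis m0 : (0 < m)%N.
Variable mu : nat -> R.
Hypothesis hmu : is_distrN mu.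

Local Notation M := (m%:R : R).

Lemma M0 : 0 < M. Proof. by rewrite ltr0n. Qed.
Lemma mu_ge0 j : 0 <= mu j. Proof. by case: hmu. Qed.
Lemma mu_0 : mu 0%N = 0. Proof. by case: hmu. Qed.
Lemma mu_sum : \esum_(j in [set: nat]) (mu j)%:E = 1%E. Proof. by case: hmu. Qed.

Definition gf j : R := if mu j < M^-1 then 1 else (2 * Num.sqrt (M * mu j))^-1.

Lemma gf_ge0 j : 0 <= gf j.
Proof.
rewrite /gf; case: ifP => // _; rewrite invr_ge0; apply: mulr_ge0 => //.
Qed.

Lemma gf_le1 j : gf j <= 1.
Proof.
rewrite /gf; case: ltP => // big.
have h1 : 1 <= M * mu j.
  by have := ler_wpM2l (ltW M0) big; rewrite mulfV // gt_eqF // M0.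
have h2 : Num.sqrt 1 <= Num.sqrt (M * mu j) by rewrite ler_sqrt //; lra.
rewrite sqrtr1 in h2.
rewrite invf_le1; lra.
Qed.

Definition pE := \esum_(j in [set: nat]) (mu j * gf j)%:E.

Lemma pE_ge0 : (0 <= pE)%E.
Proof. by apply: esum_ge0 => j _; rewrite lee_fin mulr_ge0 ?mu_ge0 ?gf_ge0. Qed.

Lemma pE_le1 : (pE <= 1)%E.
Proof.
rewrite -mu_sum; apply: le_esum => j _; rewrite lee_fin.
by rewrite ler_piMr ?mu_ge0 ?gf_le1.
Qed.

Definition p := fine pE.

Lemma pEE : pE = p%:E.
Proof.
rewrite /p fineK //; apply/fin_numPlt; apply/andP; split.
  by apply: (lt_le_trans _ pE_ge0); rewrite ltNyr.
by apply: (le_lt_trans pE_le1); rewrite ltry.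
Qed.

Lemma p_ge0 : 0 <= p. Proof. by rewrite -lee_fin -pEE pE_ge0. Qed.
Lemma p_le1 : p <= 1. Proof. by rewrite -lee_fin -pEE pE_le1. Qed.

Definition SA := [set j : nat | (0 < j)%N /\ (mu j < M^-1)%R].
Definition SC := [set j : nat | (0 < j)%N /\ (M^-1 <= mu j)%R].
Definition AA := \esum_(j in SA) (mu j)%:E.
Definition Cc := ((2 * Num.sqrt M)^-1%:E * \esum_(j in SC) (Num.sqrt (mu j))%:E)%E.

Lemma LambdaE : Lambda m mu = (AA + Cc)%E.
Proof. by []. Qed.

Lemma AA_ge0 : (0 <= AA)%E.
Proof. by apply: esum_ge0 => j _; rewrite lee_fin mu_ge0. Qed.

Lemma Cc_ge0 : (0 <= Cc)%E.
Proof.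
apply: mule_ge0; first by rewrite lee_fin invr_ge0 mulr_ge0 // sqrtr_ge0.
by apply: esum_ge0 => j _; rewrite lee_fin sqrtr_ge0.
Qed.

Lemma pE_le : (pE <= AA + Cc)%E.
Proof.
set f1 := fun j => if j \in SA then (mu j)%:E else 0%E.
set f2 := fun j => if j \in SC then ((2 * Num.sqrt M)^-1 * Num.sqrt (mu j))%:E else 0%E.
have f10 j : (0 <= f1 j)%E by rewrite /f1; case: ifP => // _; rewrite lee_fin mu_ge0.
have f20 j : (0 <= f2 j)%E.
  by rewrite /f2; case: ifP => // _; rewrite lee_fin mulr_ge0 ?sqrtr_ge0 ?invr_ge0 ?mulr_ge0 ?sqrtr_ge0.
apply: (le_trans (y := \esum_(j in [set: nat]) (f1 j + f2 j)%E)).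
  apply: le_esum => j _.
  have [->|j0] := eqVneq j 0%N.
    by rewrite mu_0 mul0r; apply: adde_ge0.
  rewrite /f1 /f2 /gf; case: ltP => hj.
    rewrite mem_set; last by split => //; rewrite lt0n.
    rewrite mulr1; apply: leeDl; exact: f20.
  rewrite memNset; last by move=> [_]; rewrite ltNge hj.
  rewrite mem_set; last by split => //; rewrite lt0n.
  rewrite add0e lee_fin.
  have muj : 0 < mu j by apply: lt_le_trans hj; rewrite invr_gt0 M0.
  rewrite sqrtrM; last exact: ltW M0.
  have s0 : 0 < Num.sqrt (mu j) by rewrite sqrtr_gt0.
  have sM : 0 < Num.sqrt M by rewrite sqrtr_gt0 M0.
  have e : mu j = Num.sqrt (mu j) * Num.sqrt (mu j) by rewrite -expr2 sqr_sqrtr // ltW.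
  rewrite [in X in X * _]e le_eqVlt; apply/orP; left; apply/eqP; field.
  by apply/andP; split; apply/lt0r_neq0.
rewrite esumD //.
apply: leeD.
  by rewrite /f1 -esum_mkcond.
rewrite /f2 -esum_mkcond /Cc -esumZl; last first.
- by move=> j; rewrite lee_fin sqrtr_ge0.
- by rewrite invr_ge0 mulr_ge0 ?sqrtr_ge0.
by apply: le_esum => j _; rewrite EFinM.
Qed.

Lemma count_esum (x : m.-tuple nat) (f : nat -> R) : (forall j, 0 <= f j) ->
  \esum_(j in [set: nat]) ((count (pred1 j) x)%:R * f j)%:E =
  (\sum_(t < m) f (tnth x t))%:E.
Proof.
move=> f0.
have E j : ((count (pred1 j) x)%:R * f j) =
    \sum_(t < m) (if tnth x t == j then f j else 0).
  rewrite -sum1_count big_tuple natr_sum mulr_suml big_mkcond /=.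
  by apply: eq_bigr => t _; case: ifP => _; rewrite ?mul1r ?mul0r.
under eq_esum do rewrite E -sumEFin.
rewrite esum_sum; last by move=> j t _ _; case: ifP => _; rewrite lee_fin.
rewrite -sumEFin; apply: eq_bigr => t _.
rewrite (eq_esum (b := fun j => if j \in [set tnth x t] then (f j)%:E else 0%E)).
  by rewrite -esum_mkcond esum_set1 // lee_fin.
move=> j _; case: eqP => [<-|ne].
  by rewrite mem_set.
by rewrite memNset // => h; apply: ne; rewrite h.
Qed.

Lemma Phi_le (x : m.-tuple nat) :
  (@Phi R m x <= (M^-1 * \sum_(t < m) gf (tnth x t))%:E + Cc)%E.
Proof.
rewrite /Phi -esumZl; first last.
- by move=> j; rewrite lee_fin sqrtr_ge0.
- by rewrite invr_ge0 sqrtr_ge0.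
apply: (le_trans (y := \esum_(j in [set j | (0<j)%N])
   ((M^-1 * ((count (pred1 j) x)%:R * gf j))%:E +
    (if M^-1 <= mu j then (2 * Num.sqrt M)^-1 * Num.sqrt (mu j) else 0)%:E)%E)).
  apply: le_esum => j _; rewrite -EFinD -EFinM lee_fin /emp /gf.
  by apply: key_pt; [exact: M0 | exact: mu_ge0].
rewrite esumD; first last.
- by move=> j _; case: ifP => _; rewrite lee_fin // mulr_ge0 ?sqrtr_ge0 ?invr_ge0 ?mulr_ge0 ?sqrtr_ge0.
- by move=> j _; rewrite lee_fin mulr_ge0 ?invr_ge0 ?mulr_ge0 ?gf_ge0.
apply: leeD.
  apply: (le_trans (y := \esum_(j in [set: nat])
     (M^-1 * ((count (pred1 j) x)%:R * gf j))%:E)).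
    rewrite esum_mkcond; apply: le_esum => j _; case: ifP => _ //.
    by rewrite lee_fin mulr_ge0 ?invr_ge0 ?mulr_ge0 ?gf_ge0.
  under eq_esum do rewrite EFinM.
  rewrite esumZl; first last.
  - by move=> j; rewrite lee_fin mulr_ge0 ?gf_ge0.
  - by rewrite invr_ge0.
  by rewrite count_esum // => j; exact: gf_ge0.
rewrite /Cc -esumZl; first last.
- by move=> j; rewrite lee_fin sqrtr_ge0.
- by rewrite invr_ge0 mulr_ge0 ?sqrtr_ge0.
have -> : SC = [set j | (0<j)%N] `&` [set j | M^-1 <= mu j] by [].
rewrite esum_mkcondr; apply: le_esum => j _.
case: ifP => hj.
  by rewrite mem_set // EFinM.
by rewrite memNset // => /= h; move: hj; rewrite h.
Qed.

Lemma sp_sum : \esum_(x in [set: m.-tuple nat]) (sample_prob mu x)%:E = 1%E.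
Proof.
rewrite /sample_prob (@esum_tuple_prod R m (fun _ j => mu j) (fun _ => 1)).
- by rewrite big1.
- by move=> _ j; exact: mu_ge0.
- by move=> t _; rewrite mu_sum.
Qed.

Lemma prod_pick (t : 'I_m) (F : 'I_m -> R) :
  \prod_(s < m) (if (s : nat) == (t : nat) then F s else 1) = F t.
Proof.
rewrite -big_mkcond /=.
by rewrite (big_pred1 t) // => s /=.
Qed.

Lemma marginal (t : 'I_m) :
  \esum_(x in [set: m.-tuple nat]) (sample_prob mu x * gf (tnth x t))%:E = p%:E.
Proof.
rewrite (eq_esum (b := fun x : m.-tuple nat => (\prod_(s < m)
   (mu (tnth x s) * (if (s : nat) == (t : nat) then gf (tnth x s) else 1)))%:E)); last first.
  by move=> x _; rewrite big_split /= prod_pick.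
rewrite (@esum_tuple_prod R m (fun s j => mu j * (if s == (t : nat) then gf j else 1))
   (fun s => if s == (t : nat) then p else 1)).
- by rewrite prod_pick.
- by move=> s j; rewrite mulr_ge0 ?mu_ge0 //; case: ifP => _ //; exact: gf_ge0.
- move=> s _; case: ifP => _.
    by rewrite -pEE.
  by under eq_esum do rewrite mulr1; rewrite mu_sum.
Qed.

Lemma E_Phi_le : (E_Phi m mu <= 2%:E * Lambda m mu)%E.
Proof.
rewrite LambdaE.
have := Cc_ge0; case hC : Cc => [c| |] // c0.
  rewrite lee_fin in c0.
  apply: (le_trans (y := \esum_(x in [set: m.-tuple nat])
     ((sample_prob mu x * (M^-1 * \sum_(t < m) gf (tnth x t)))%:E +
      (c * sample_prob mu x)%:E)%E)).
    apply: le_esum => x _.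
    have sp0 : 0 <= sample_prob mu x by apply: prodr_ge0 => t _; exact: mu_ge0.
    apply: (le_trans (lee_wpmul2l _ (Phi_le x))); first by rewrite lee_fin.
    rewrite hC.
    set S := (M^-1 * \sum_(t < m) gf (tnth x t)).
    have -> : ((sample_prob mu x)%:E * (S%:E + c%:E))%E = (sample_prob mu x * (S + c))%:E by [].
    by rewrite -EFinD lee_fin mulrDr [c * _]mulrC.
  rewrite esumD; first last.
  - move=> x _; rewrite lee_fin mulr_ge0 //.
    by apply: prodr_ge0 => t _; exact: mu_ge0.
  - move=> x _; rewrite lee_fin mulr_ge0 //.
      by apply: prodr_ge0 => t _; exact: mu_ge0.
    by rewrite mulr_ge0 ?invr_ge0 // sumr_ge0 // => t _; exact: gf_ge0.
  have e1 : \esum_(x in [set: m.-tuple nat])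
      (sample_prob mu x * (M^-1 * \sum_(t < m) gf (tnth x t)))%:E = p%:E.
    transitivity (\esum_(x in [set: m.-tuple nat])
       (\sum_(t < m) (M^-1 * (sample_prob mu x * gf (tnth x t)))%:E)%E).
      apply: eq_esum => x _; rewrite sumEFin; congr EFin.
      rewrite mulr_sumr mulr_sumr; apply: eq_bigr => t _; ring.
    rewrite esum_sum; last first.
      move=> x t _ _; rewrite lee_fin mulr_ge0 ?invr_ge0 // mulr_ge0 ?gf_ge0 //.
      by apply: prodr_ge0 => s _; exact: mu_ge0.
    transitivity (\sum_(t < m) (M^-1 * p)%:E)%E.
      apply: eq_bigr => t _.
      rewrite (eq_esum (b := fun x : m.-tuple nat =>
          ((M^-1)%:E * (sample_prob mu x * gf (tnth x t))%:E)%E)) //.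
      rewrite esumZl ?marginal //.
      move=> x; rewrite lee_fin mulr_ge0 ?gf_ge0 //.
      by apply: prodr_ge0 => s _; exact: mu_ge0.
    rewrite sumEFin sumr_const card_ord.
    have -> : M^-1 * p *+ m = M * (M^-1 * p) by rewrite mulr_natl.
    rewrite mulrA mulfV ?mul1r //.
    exact: lt0r_neq0 M0.
  have e2 : \esum_(x in [set: m.-tuple nat]) (c * sample_prob mu x)%:E = c%:E.
    under eq_esum do rewrite EFinM.
    by rewrite esumZl // ?sp_sum ?mule1 // => x; rewrite lee_fin; apply: prodr_ge0 => s _; exact: mu_ge0.
  rewrite e1 e2.
  have := pE_le; rewrite hC pEE => h.
  rewrite mule_natl mule2n; apply: leeD => //.
  exact: leeDr AA_ge0.
have hA : (-oo < AA)%E by apply: (lt_le_trans _ AA_ge0); rewrite ltNyr.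
rewrite addey ?gt_eqF //.
by rewrite gt0_muley ?lte_fin // leey.
Qed.

Lemma twoL c : Cc = c%:E -> ((p + c)%:E <= 2%:E * Lambda m mu)%E.
Proof.
move=> hC; rewrite LambdaE.
have := pE_le; rewrite hC pEE => h.
rewrite mule_natl mule2n EFinD; apply: leeD => //.
exact: leeDr AA_ge0.
Qed.

Lemma mgf_bound (th : R) : 0 <= th ->
  (\esum_(j in [set: nat]) (mu j * expR (th * (gf j - p)))%:E
     <= (expR (th ^+ 2 / 4))%:E)%E.
Proof.
move=> th0.
set E := expR (- (th * p)).
have E0 : 0 <= E by exact: expR_ge0.
have e1 : 0 <= expR th - 1.
  by rewrite subr_ge0 -expR0 ler_expR.
apply: (le_trans (y := \esum_(j in [set: nat])
   ((E * mu j)%:E + ((E * (expR th - 1)) * (mu j * gf j))%:E)%E)).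
  apply: le_esum => j _; rewrite -EFinD lee_fin.
  have hc := @exp_chord R th (gf j) (gf_ge0 j) (gf_le1 j).
  have -> : expR (th * (gf j - p)) = expR (th * gf j) * E.
    by rewrite -expRD; congr expR; ring.
  have h2 : mu j * E * expR (th * gf j) <= mu j * E * (1 - gf j + gf j * expR th).
    by apply: ler_wpM2l => //; apply: mulr_ge0 => //; exact: mu_ge0.
  apply: (le_trans (y := mu j * E * (1 - gf j + gf j * expR th))).
    by apply: (le_trans _ h2); rewrite le_eqVlt; apply/orP; left; apply/eqP; ring.
  by rewrite le_eqVlt; apply/orP; left; apply/eqP; ring.
rewrite esumD; first last.
- by move=> j _; rewrite lee_fin !mulr_ge0 ?mu_ge0 ?gf_ge0.
- by move=> j _; rewrite lee_fin mulr_ge0 ?mu_ge0.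
under eq_esum do rewrite EFinM.
rewrite esumZl // ?mu_sum; last by move=> j; rewrite lee_fin mu_ge0.
under eq_esum do rewrite EFinM.
rewrite esumZl; first last.
- by move=> j; rewrite lee_fin mulr_ge0 ?mu_ge0 ?gf_ge0.
- by apply: mulr_ge0.
rewrite -/pE pEE mule1 -EFinM -EFinD lee_fin.
have hp : 0 <= p <= 1 by rewrite p_ge0 p_le1.
have hh := @hoeff R p th hp th0.
have : E * (1 - p + p * expR th) <= E * expR (th * p + th ^+ 2 / 4).
  by apply: ler_wpM2l.
have -> : E * expR (th * p + th ^+ 2 / 4) = expR (th ^+ 2 / 4).
  by rewrite /E -expRD; congr expR; ring.
move=> h; apply: (le_trans _ h); rewrite le_eqVlt; apply/orP; left; apply/eqP; ring.
Qed.

Lemma tail (s : R) : 0 <= s ->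
  (\esum_(x in ~` [set x : m.-tuple nat |
      (@Phi R m x <= 2%:E * Lambda m mu + s%:E)%E]) (sample_prob mu x)%:E
   <= (expR (- (M * s ^+ 2)))%:E)%E.
Proof.
move=> s0.
set th := 2 * s.
have th0 : 0 <= th by rewrite /th mulr_ge0.
set cE := \esum_(j in [set: nat]) (mu j * expR (th * (gf j - p)))%:E.
have cE0 : (0 <= cE)%E.
  by apply: esum_ge0 => j _; rewrite lee_fin mulr_ge0 ?mu_ge0 ?expR_ge0.
have cEle : (cE <= (expR (th ^+ 2 / 4))%:E)%E by exact: mgf_bound.
have cEE : cE = (fine cE)%:E.
  rewrite fineK //; apply/fin_numPlt; apply/andP; split.
    by apply: (lt_le_trans _ cE0); rewrite ltNyr.
  by apply: (le_lt_trans cEle); rewrite ltry.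
set c := fine cE.
have c0 : 0 <= c by rewrite -lee_fin -cEE.
have cle : c <= expR (th ^+ 2 / 4) by rewrite -lee_fin -cEE.
have sp0 x : 0 <= sample_prob mu x by apply: prodr_ge0 => t _; exact: mu_ge0.
set F := fun x : m.-tuple nat => (expR (- (th * M * s)) *
   \prod_(t < m) (mu (tnth x t) * expR (th * (gf (tnth x t) - p)))).
have F0 x : 0 <= F x.
  apply: mulr_ge0; first exact: expR_ge0.
  by apply: prodr_ge0 => t _; rewrite mulr_ge0 ?mu_ge0 ?expR_ge0.
have sp_ : \sum_(t < m) p = M * p by rewrite sumr_const card_ord mulr_natl.
have eF x : F x = sample_prob mu x *
    expR (th * (\sum_(t < m) gf (tnth x t) - M * p) - th * M * s).
  rewrite /F big_split /= -expR_sum /sample_prob.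
  have -> : \sum_(t < m) th * (gf (tnth x t) - p) =
      th * (\sum_(t < m) gf (tnth x t) - M * p).
    by rewrite -mulr_sumr sumrB sp_.
  rewrite mulrCA -expRD; congr (_ * expR _); ring.
apply: (le_trans (y := \esum_(x in [set: m.-tuple nat]) (F x)%:E)).
  rewrite esum_mkcond; apply: le_esum => x _; case: ifP => hx; last by rewrite lee_fin.
  have hx' : ~ (@Phi R m x <= 2%:E * Lambda m mu + s%:E)%E.
    by move: hx; rewrite in_setE.
  have hlt : (2%:E * Lambda m mu + s%:E < @Phi R m x)%E.
    by rewrite ltNge; apply/negP.
  have := Cc_ge0; case hC : Cc => [c'| |] // _; last first.
    exfalso; apply: hx'.
    have hA : (-oo < AA)%E by apply: (lt_le_trans _ AA_ge0); rewrite ltNyr.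
    by rewrite LambdaE hC addey ?gt_eqF // gt0_muley ?lte_fin // addye // leey.
  have h1 := twoL c' hC.
  have h2 := Phi_le x; rewrite hC in h2.
  have h3 : ((p + c' + s)%:E < (M^-1 * \sum_(t < m) gf (tnth x t) + c')%:E)%E.
    apply: (le_lt_trans _ (lt_le_trans hlt h2)).
    by rewrite EFinD; apply: leeD.
  rewrite lte_fin in h3.
  have h4 : M * (p + s) < \sum_(t < m) gf (tnth x t).
    have : p + s < M^-1 * \sum_(t < m) gf (tnth x t) by lra.
    by rewrite ltr_pdivlMl ?M0.
  rewrite eF lee_fin ler_peMr //.
  have -> : th * (\sum_(t < m) gf (tnth x t) - M * p) - th * M * s =
     th * (\sum_(t < m) gf (tnth x t) - M * (p + s)) by ring.
  have hE : 0 <= th * (\sum_(t < m) gf (tnth x t) - M * (p + s)).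
    by apply: mulr_ge0 => //; lra.
  by apply: (le_trans _ (expR_ge1Dx _)); lra.
under eq_esum do rewrite /F EFinM.
rewrite esumZl; first last.
- by move=> x; rewrite lee_fin; apply: prodr_ge0 => t _; rewrite mulr_ge0 ?mu_ge0 ?expR_ge0.
- exact: expR_ge0.
rewrite (@esum_tuple_prod R m (fun _ j => mu j * expR (th * (gf j - p))) (fun _ => c)); first last.
- by move=> t _; rewrite -cEE.
- by move=> _ j; rewrite mulr_ge0 ?mu_ge0 ?expR_ge0.
have hP : \prod_(t < m) c <= expR (M * (th ^+ 2 / 4)).
  apply: (le_trans (y := \prod_(t < m) expR (th ^+ 2 / 4))).
    by apply: ler_prod => t _; rewrite c0 cle.
  rewrite -expR_sum sumr_const card_ord.
  by rewrite mulr_natl.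
have : expR (- (th * M * s)) * \prod_(t < m) c <=
    expR (- (th * M * s)) * expR (M * (th ^+ 2 / 4)).
  by apply: ler_wpM2l => //; exact: expR_ge0.
rewrite -expRD.
have -> : - (th * M * s) + M * (th ^+ 2 / 4) = - (M * s ^+ 2) by rewrite /th; field.
by move=> h; rewrite lee_fin.
Qed.

End Main.

Theorem theorem3 (R : realType) (m : nat) (mu : nat -> R) :
  (0 < m)%N -> is_distrN mu ->
  (E_Phi m mu <= 2%:E * Lambda m mu)%E /\
  (forall delta : R, 0 < delta < 1 ->
     (Prob mu [set x : m.-tuple nat |
        (@Phi R m x <= 2%:E * Lambda m mu + (Num.sqrt (ln (delta^-1) / m%:R))%:E)%E]
      >= (1 - delta)%:E)%E).
Proof.
move=> m0 hmu; split; first exact: (@E_Phi_le R m m0 mu hmu).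
move=> delta /andP[d0 d1].
set s := Num.sqrt (ln delta^-1 / m%:R).
have s0 : 0 <= s by apply: sqrtr_ge0.
have hl : 0 <= ln delta^-1 / m%:R.
  apply: divr_ge0 => //; apply: ln_ge0.
  by rewrite invf_ge1 // ltW.
have ss : m%:R * s ^+ 2 = ln delta^-1.
  by rewrite /s sqr_sqrtr // mulrC divfK // pnatr_eq0 -lt0n.
have ed : expR (- (m%:R * s ^+ 2)) = delta.
  by rewrite ss lnV ?posrE // opprK lnK ?posrE.
have ht := @tail R m m0 mu hmu s s0; rewrite ed in ht.
have tot := @sp_sum R m mu hmu.
set AS := [set x : m.-tuple nat |
        (@Phi R m x <= 2%:E * Lambda m mu + s%:E)%E].
rewrite (esumID AS) ?setTI in tot; last first.
  by move=> x _; rewrite lee_fin; apply: prodr_ge0 => t _; case: hmu.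
rewrite /Prob.
move: tot ht.
set a := \esum_(x in AS) _.
set b := \esum_(x in ~` AS) _.
have a0 : (0 <= a)%E.
  by apply: esum_ge0 => x _; rewrite lee_fin; apply: prodr_ge0 => t _; case: hmu.
have b0 : (0 <= b)%E.
  by apply: esum_ge0 => x _; rewrite lee_fin; apply: prodr_ge0 => t _; case: hmu.
move: a0 b0; case: a => [ra| |] //; case: b => [rb| |] // ra0 rb0.
  rewrite -EFinD => /eqP; rewrite eqe => /eqP hab hb.
  by rewrite lee_fin; rewrite lee_fin in hb; lra.
Qed.
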